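(* Let $\mathcal{H}$ be a separable infinite dimensional Hilbert space and let $Z_1,Z_2$ be Read isometries on $\mathcal{H}$. Then for any non-zero $p\in\mathbb{N}$, the WOT-closed algebra $\mathfrak{Z}_p$ generated by $\{Z_\mu:\mu\in\mathbb{F}_2^+,\ |\mu|=p\}$ equals $B(\mathcal{H})$.
   Context: $\mathbb{F}_2^+$ is the free semigroup on $\{1,2\}$ (words in $1,2$), $|\mu|$ the length of a word, and $Z_\mu=Z_{i_1}\cdots Z_{i_n}$ for $\mu=i_1\cdots i_n$. Read isometries are isometries $Z_1,Z_2$ on $\mathcal{H}$ with $Z_1Z_1^*+Z_2Z_2^*=I$, constructed by Read (and streamlined by Davidson), with the property that there exist orthonormal bases $\{h_j\}_{j\in\mathbb{N}}$, $\{g_i\}_{i\in\mathbb{N}}$ of $\mathcal{H}$ and operators $S_{i,j,k}\in\operatorname{span}\{Z_w: w\in\mathbb{F}_2^+,\ |w|=2^k\}$ such that for each $i,j$, $S_{i,j,k}\to g_i\otimes h_j^*$ in the WOT as $k\to\infty$, where $g\otimes h^*$ denotes the rank one operator $\xi\mapsto\langle\xi,h\rangle g$. *)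

(* Defs.v *)
(* A complex Hilbert space is an lmodType over R[i] (R : realType, the reals)
   together with an inner product satisfying the usual axioms and completeness. *)
From mathcomp Require Import all_boot all_algebra.
From mathcomp Require Import complex.
From mathcomp Require Import reals.
Set Implicit Arguments. Unset Strict Implicit. Unset Printing Implicit Defensive.
Import GRing.Theory Num.Theory.
Local Open Scope ring_scope.
Local Open Scope complex_scope.

Section HilbertDefs.
Variables (R : realType) (H : lmodType R[i]) (ip : H -> H -> R[i]).

Definition inner_product_axioms : Prop :=
  [/\ (forall (a : R[i]) (x y z : H), ip (a *: x + y) z = a * ip x z + ip y z),
      (forall x y : H, ip x y = (ip y x)^*),
      (forall x : H, 0 <= ip x x) &
      (forall x : H, ip x x = 0 -> x = 0)].

Definition hnorm (x : H) : R[i] := sqrtC (ip x x).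

Definition cauchy_seq (u : nat -> H) : Prop :=
  forall e : R[i], 0 < e -> exists N : nat,
    forall m n : nat, (N <= m)%N -> (N <= n)%N -> hnorm (u m - u n) < e.

Definition converges_to (u : nat -> H) (l : H) : Prop :=
  forall e : R[i], 0 < e -> exists N : nat,
    forall n : nat, (N <= n)%N -> hnorm (u n - l) < e.

Definition hilbert_space : Prop :=
  inner_product_axioms /\
  (forall u : nat -> H, cauchy_seq u -> exists l : H, converges_to u l).

Definition separable : Prop :=
  exists d : nat -> H, forall (x : H) (e : R[i]), 0 < e ->
    exists n : nat, hnorm (x - d n) < e.

Definition infinite_dimensional : Prop :=
  forall s : seq H, exists x : H,
    ~ exists c : nat -> R[i], x = \sum_(i < size s) c i *: s`_i.

Definition orthonormal_basis (e : nat -> H) : Prop :=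
  (forall i j : nat, ip (e i) (e j) = (i == j)%:R) /\
  (forall (x : H) (eps : R[i]), 0 < eps ->
     exists (n : nat) (c : nat -> R[i]),
       hnorm (x - \sum_(i < n) c i *: e i) < eps).

Definition bounded_linear (T : H -> H) : Prop :=
  (forall (a : R[i]) (x y : H), T (a *: x + y) = a *: T x + T y) /\
  (exists M : R[i], forall x : H, hnorm (T x) <= M * hnorm x).

Definition is_adjoint (T S : H -> H) : Prop :=
  forall x y : H, ip (T x) y = ip x (S y).

Definition isometry (T : H -> H) : Prop :=
  bounded_linear T /\ forall x y : H, ip (T x) (T y) = ip x y.

Definition rank_one (g h : H) : H -> H := fun xi => ip xi h *: g.

Definition wot_converges (S : nat -> H -> H) (T : H -> H) : Prop :=
  forall (x y : H) (e : R[i]), 0 < e -> exists N : nat,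
    forall k : nat, (N <= k)%N -> `|ip (S k x) y - ip (T x) y| < e.

Definition op_span (G : (H -> H) -> Prop) (T : H -> H) : Prop :=
  exists (s : seq (H -> H)) (c : nat -> R[i]),
    (forall i : nat, (i < size s)%N -> G (nth id s i)) /\
    T = (fun x => \sum_(i < size s) c i *: (nth id s i) x).

(* the (non-unital) algebra generated by G: span of finite non-empty products *)
Definition op_products (G : (H -> H) -> Prop) (T : H -> H) : Prop :=
  exists s : seq (H -> H), s <> [::] /\
    (forall i : nat, (i < size s)%N -> G (nth id s i)) /\
    T = foldr (fun f g => f \o g) id s.

Definition gen_algebra (G : (H -> H) -> Prop) : (H -> H) -> Prop :=
  op_span (op_products G).

(* WOT closure (inside B(H)) of a set of operators: every basic WOT
   neighbourhood of T meets A *)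
Definition wot_closure (A : (H -> H) -> Prop) (T : H -> H) : Prop :=
  bounded_linear T /\
  forall (s : seq (H * H)) (e : R[i]), 0 < e ->
    exists S : H -> H, A S /\
      forall xy : H * H, xy \in s -> 
        `|ip (T xy.1) xy.2 - ip (S xy.1) xy.2| < e.

(* words in the free semigroup on {1,2}: false = 1, true = 2;
   Z_mu = Z_{i1} ... Z_{in} for mu = i1 ... in *)
Definition Zword (Z1 Z2 : H -> H) (w : seq bool) : H -> H :=
  foldr (fun b f => (if b then Z2 else Z1) \o f) id w.

Definition read_isometries (Z1 Z2 : H -> H) : Prop :=
  isometry Z1 /\ isometry Z2 /\
  (exists Z1s Z2s : H -> H, is_adjoint Z1 Z1s /\ is_adjoint Z2 Z2s /\
     forall x : H, Z1 (Z1s x) + Z2 (Z2s x) = x) /\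
  exists (h g : nat -> H) (S : nat -> nat -> nat -> H -> H),
    orthonormal_basis h /\ orthonormal_basis g /\
    (forall i j k : nat,
       op_span (fun T => exists w : seq bool, size w = (2 ^ k)%N /\ T = Zword Z1 Z2 w)
               (S i j k)) /\
    (forall i j : nat, wot_converges (S i j) (rank_one (g i) (h j))).

End HilbertDefs.

(* Main.v *)
Require Import Defs.
From mathcomp Require Import all_boot all_order all_algebra.
From mathcomp Require Import complex.
From mathcomp Require Import reals.
From Stdlib Require Import FunctionalExtensionality Classical.
From mathcomp Require Import ring.
Set Implicit Arguments. Unset Strict Implicit. Unset Printing Implicit Defensive.
Import Order.POrderTheory GRing.Theory Num.Theory.
Local Open Scope ring_scope.
Local Open Scope complex_scope.

Section IP.
Variables (R : realType) (H : lmodType R[i]) (ip : H -> H -> R[i]).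
Hypothesis hip : inner_product_axioms ip.

Lemma ipDZl a x y z : ip (a *: x + y) z = a * ip x z + ip y z.
Proof. by case: hip => h1 h2 h3 h4; auto. Qed.
Lemma ipC x y : ip x y = conjc (ip y x).
Proof. by case: hip => h1 h2 h3 h4; auto. Qed.
Lemma ip_ge0 x : 0 <= ip x x.
Proof. by case: hip => h1 h2 h3 h4; auto. Qed.
Lemma ip_eq0 x : ip x x = 0 -> x = 0.
Proof. by case: hip => h1 h2 h3 h4; auto. Qed.

Lemma ip0l z : ip 0 z = 0.
Proof.
have := ipDZl 1 0 0 z; rewrite scaler0 addr0 mul1r => h.
by apply: (@addrI _ (ip 0 z)); rewrite addr0 -h.
Qed.
Lemma ipDl x y z : ip (x + y) z = ip x z + ip y z.
Proof. by have := ipDZl 1 x y z; rewrite scale1r mul1r. Qed.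
Lemma ipZl a x z : ip (a *: x) z = a * ip x z.
Proof. by rewrite -[a *: x]addr0 ipDZl ip0l addr0. Qed.
Lemma ipNl x z : ip (- x) z = - ip x z.
Proof. by rewrite -scaleN1r ipZl mulN1r. Qed.
Lemma ipBl x y z : ip (x - y) z = ip x z - ip y z.
Proof. by rewrite ipDl ipNl. Qed.
Lemma ip0r z : ip z 0 = 0.
Proof. by rewrite ipC ip0l conjc0. Qed.
Lemma ipDr x y z : ip z (x + y) = ip z x + ip z y.
Proof. by rewrite ipC ipDl rmorphD [ip z x]ipC [ip z y]ipC. Qed.
Lemma ipZr a x z : ip z (a *: x) = conjc a * ip z x.
Proof. by rewrite ipC ipZl rmorphM [ip z x]ipC. Qed.
Lemma ipNr x z : ip z (- x) = - ip z x.
Proof. by rewrite -scaleN1r ipZr rmorphN1 mulN1r. Qed.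
Lemma ipBr x y z : ip z (x - y) = ip z x - ip z y.
Proof. by rewrite ipDr ipNr. Qed.
Lemma ip_suml (I : Type) (r : seq I) (P : pred I) (F : I -> H) z :
  ip (\sum_(i <- r | P i) F i) z = \sum_(i <- r | P i) ip (F i) z.
Proof.
elim/big_rec2: _ => [|i y1 y2 _ <-]; first exact: ip0l.
by rewrite ipDl.
Qed.
Lemma ip_sumr (I : Type) (r : seq I) (P : pred I) (F : I -> H) z :
  ip z (\sum_(i <- r | P i) F i) = \sum_(i <- r | P i) ip z (F i).
Proof.
elim/big_rec2: _ => [|i y1 y2 _ <-]; first exact: ip0r.
by rewrite ipDr.
Qed.

Lemma conj_ge0_id (x : R[i]) : 0 <= x -> conjc x = x.
Proof. case: x => a b /= /andP[/eqP hb _]; subst; by rewrite /conjc oppr0. Qed.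

Lemma ip_conj x : conjc (ip x x) = ip x x.
Proof. exact/conj_ge0_id/ip_ge0. Qed.

Local Notation nm := (hnorm ip).

Lemma nm_ge0 x : 0 <= nm x.
Proof. by rewrite /hnorm sqrtC_ge0 ip_ge0. Qed.
Lemma nm_sq x : nm x ^+ 2 = ip x x.
Proof. exact: sqrtCK. Qed.

Lemma normJ (z : R[i]) : z * conjc z = `|z| ^+ 2.
Proof. by rewrite sqr_normc. Qed.

Lemma CS_sq x y : `|ip x y| ^+ 2 <= ip x x * ip y y.
Proof.
have [y0|ny0] := eqVneq (ip y y) 0.
  by rewrite (ip_eq0 y0) !ip0r normr0 expr0n /= mulr0.
pose t : R[i] := ip x y / ip y y.
have := ip_ge0 (x - t *: y).
rewrite ipBl !ipBr !ipZl !ipZr.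
have e1 : ip y x = conjc (ip x y) by rewrite ipC.
have e2 : conjc t = conjc (ip x y) / ip y y.
  by rewrite /t rmorphM fmorphV /= ip_conj.

rewrite e2 e1 /t -normJ.
set a := ip x x; set b := ip y y; set c := ip x y.
have -> : a - conjc c / b * c - (c / b * conjc c - c / b * (conjc c / b * b)) =
          (a * b - c * conjc c) / b.
  by field.
move=> h.
have bgt : 0 < b by rewrite lt0r ny0 ip_ge0.
have h2 := mulr_ge0 h (ltW bgt); rewrite divfK // subr_ge0 in h2.
exact: h2.
Qed.

Lemma CS x y : `|ip x y| <= nm x * nm y.
Proof.
rewrite -ler_sqr ?nnegrE ?mulr_ge0 ?nm_ge0 //.
by rewrite exprMn !nm_sq CS_sq.
Qed.


Definition proj (e : nat -> H) (n : nat) (u : H) : H :=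
  \sum_(i < n) ip u (e i) *: e i.

Lemma small_mul (a b e : R[i]) : 0 <= a -> 0 <= b -> 0 < e ->
  a < e / (b + 1) -> a * b < e.
Proof.
move=> a0 b0 e0 h.
have b1 : 0 < b + 1 by rewrite ltr_wpDl.
apply: (le_lt_trans (y := a * (b + 1))).
  by rewrite ler_wpM2l // lerDl ler01.
by rewrite -(ltr_pM2r b1) divfK ?gt_eqF // in h.
Qed.

Section Ortho.
Variable e : nat -> H.
Hypothesis he : forall i j : nat, ip (e i) (e j) = (i == j)%:R.

Lemma proj_res n u (j : 'I_n) : ip (u - proj e n u) (e j) = 0.
Proof.
rewrite ipBl /proj ip_suml (bigD1 j) //= big1 => [|i hij].
  by rewrite ipZl he eqxx mulr1 addr0 subrr.
by rewrite ipZl he; move: hij; rewrite -val_eqE /= => /negbTE ->; rewrite mulr0.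
Qed.

Lemma proj_res_span n u (d : nat -> R[i]) :
  ip (u - proj e n u) (\sum_(i < n) d i *: e i) = 0.
Proof.
rewrite ip_sumr big1 // => i _.
by rewrite ipZr proj_res mulr0.
Qed.

Lemma pyth r v : ip r v = 0 -> ip (r + v) (r + v) = ip r r + ip v v.
Proof.
move=> h; rewrite !ipDl !ipDr h [ip v r]ipC h.
have -> : conjc (0 : R[i]) = 0 by rewrite /conjc /= oppr0.
by rewrite !addr0 add0r.
Qed.

Lemma best n u (c : nat -> R[i]) :
  ip (u - proj e n u) (u - proj e n u) <=
  ip (u - \sum_(i < n) c i *: e i) (u - \sum_(i < n) c i *: e i).
Proof.
have -> : u - \sum_(i < n) c i *: e i =
   (u - proj e n u) + \sum_(i < n) (ip u (e i) - c i) *: e i.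
  rewrite /proj.
  under [X in _ = _ + X]eq_bigr => i _ do rewrite scalerBl.
  by rewrite sumrB addrA subrK.
have ho := proj_res_span n u (fun i => ip u (e i) - c i).
rewrite (pyth ho).
have := ip_ge0 (\sum_(i < n) (ip u (e i) - c i) *: e i).
by rewrite lerDl.
Qed.

Lemma bessel n u : ip (proj e n u) (proj e n u) <= ip u u.
Proof.
have E : ip u u = ip (u - proj e n u + proj e n u) (u - proj e n u + proj e n u) by rewrite subrK.
have ho : ip (u - proj e n u) (proj e n u) = 0 by exact: (proj_res_span n u (fun i => ip u (e i))).
rewrite E (pyth ho).
have := ip_ge0 (u - proj e n u).
by rewrite lerDr.
Qed.

End Ortho.

Lemma nm_le x y : ip x x <= ip y y -> hnorm ip x <= hnorm ip y.
Proof. by move=> h; rewrite /hnorm ler_sqrtC ?nnegrE ?ip_ge0. Qed.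

Definition ev (Q : nat -> Prop) := exists n0, forall N, (n0 <= N)%N -> Q N.

Lemma ev_and Q1 Q2 : ev Q1 -> ev Q2 -> ev (fun N => Q1 N /\ Q2 N).
Proof.
move=> [n1 h1] [n2 h2]; exists (maxn n1 n2) => N hN.
by split; [apply: h1 | apply: h2]; apply: leq_trans hN; rewrite ?leq_maxl ?leq_maxr.
Qed.

Lemma ev_seq (T : eqType) (s : seq T) (Q : T -> nat -> Prop) :
  (forall z, z \in s -> ev (Q z)) -> ev (fun N => forall z, z \in s -> Q z N).
Proof.
elim: s => [|a s IH] h; first by exists 0%N => N _ z.
have [n1 h1] := h a (mem_head _ _).
have [n2 h2] := IH (fun z hz => h z (@mem_behead _ (a :: s) z hz)).
exists (maxn n1 n2) => N hN z; rewrite in_cons => /orP[/eqP -> |hz].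
  by apply: h1; apply: leq_trans hN; rewrite leq_maxl.
by apply: h2 => //; apply: leq_trans hN; rewrite leq_maxr.
Qed.

Lemma ev_nat n (Q : nat -> nat -> Prop) :
  (forall i, (i < n)%N -> ev (Q i)) -> ev (fun N => forall i, (i < n)%N -> Q i N).
Proof.
elim: n => [|n IH] h; first by exists 0%N => N _ i.
have [n1 h1] := h n (ltnSn n).
have [n2 h2] := IH (fun i hi => h i (leqW hi)).
exists (maxn n1 n2) => N hN i; rewrite ltnS leq_eqVlt => /orP[/eqP -> | hi].
  by apply: h1; apply: leq_trans hN; rewrite leq_maxl.
by apply: h2 => //; apply: leq_trans hN; rewrite leq_maxr.
Qed.

Lemma fourier e : orthonormal_basis ip e -> forall u (eps : R[i]), 0 < eps ->
  ev (fun N => hnorm ip (u - proj e N u) < eps).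
Proof.
move=> [he hd] u eps eps0.
have [n [c hc]] := hd u eps eps0.
exists n => N hN.
pose c' i := if (i < n)%N then c i else 0.
have E : \sum_(i < N) c' i *: e i = \sum_(i < n) c i *: e i.
  rewrite -(big_mkord xpredT (fun i => c' i *: e i)) -(big_mkord xpredT (fun i => c i *: e i)).
  rewrite (@big_cat_nat _ _ _ n 0 N _ _ (leq0n n) hN) /=.
  rewrite [X in _ + X]big_nat_cond [X in _ + X]big1 ?addr0 => [|i].
    rewrite big_nat_cond [in RHS]big_nat_cond; apply: eq_bigr => i.
    by rewrite andbT /c' => /andP[_ ->].
  by rewrite andbT /c' => /andP[]; rewrite leqNgt => /negbTE -> _; rewrite scale0r.
apply: le_lt_trans hc; apply: nm_le; rewrite -E; exact: best.
Qed.


Lemma approx (h g : nat -> H) (T : H -> H) (M : R[i]) :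
  orthonormal_basis ip h -> orthonormal_basis ip g ->
  (forall a x y, T (a *: x + y) = a *: T x + T y) ->
  0 <= M -> (forall u, hnorm ip (T u) <= M * hnorm ip u) ->
  forall (s : seq (H * H)) (eps : R[i]), 0 < eps ->
  ev (fun N => forall z, z \in s ->
     `|ip (T z.1) z.2 - ip (T (proj h N z.1)) (proj g N z.2)| < eps).
Proof.
move=> hh hg lin M0 bd s eps e0.
apply: ev_seq => -[w y] _ /=.
have e2 : 0 < eps / 2 by rewrite divr_gt0 // ltr0n.
set K1 := M * hnorm ip y; set K2 := M * hnorm ip w.
have K1p : 0 <= K1 by rewrite mulr_ge0 // nm_ge0.
have K2p : 0 <= K2 by rewrite mulr_ge0 // nm_ge0.
have d1 : 0 < eps / 2 / (K1 + 1) by rewrite divr_gt0 // ltr_wpDl.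
have d2 : 0 < eps / 2 / (K2 + 1) by rewrite divr_gt0 // ltr_wpDl.
have [n0 hn] := ev_and (fourier hh w d1) (fourier hg y d2).
exists n0 => N /hn [h1 h2].
have TN : T (w - proj h N w) = T w - T (proj h N w).
  by have := lin (-1) (proj h N w) w; rewrite !scaleN1r addrC => ->; rewrite addrC.
have -> : ip (T w) y - ip (T (proj h N w)) (proj g N y) =
    ip (T (w - proj h N w)) y + ip (T (proj h N w)) (y - proj g N y).
  by rewrite TN ipBl ipBr addrA subrK.
rewrite (splitr eps).
apply: le_lt_trans (ler_normD _ _) _.
apply: ltrD.
- apply: le_lt_trans (CS _ _) _.
  apply: (le_lt_trans (y := hnorm ip (w - proj h N w) * K1)).
    rewrite /K1 mulrA [_ * M]mulrC.
    by apply: ler_wpM2r; [exact: nm_ge0 | exact: bd].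
  by apply: small_mul => //; exact: nm_ge0.
- apply: le_lt_trans (CS _ _) _.
  apply: (le_lt_trans (y := hnorm ip (y - proj g N y) * K2)).
    rewrite [X in _ <= X]mulrC /K2.
    apply: ler_wpM2r; first exact: nm_ge0.
    apply: le_trans (bd _) _.
    apply: ler_wpM2l => //; apply: nm_le; exact: bessel hh.1 _ _.
  by apply: small_mul => //; exact: nm_ge0.
Qed.


Definition iso_pair (V Vs : H -> H) :=
  is_adjoint ip V Vs /\ forall x y, ip (V x) (V y) = ip x y.

Lemma ip_ext_r a b : (forall z, ip z a = ip z b) -> a = b.
Proof.
move=> h; apply/eqP; rewrite -subr_eq0; apply/eqP; apply: ip_eq0.
by rewrite ipBr h subrr.
Qed.

Section Iso.
Variables V Vs : H -> H.
Hypothesis hV : iso_pair V Vs.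

Lemma iso_inv x : Vs (V x) = x.
Proof.
apply: ip_ext_r => z; case: hV => adj iso.
by rewrite -adj iso.
Qed.

Lemma iso_lin a x y : Vs (a *: x + y) = a *: Vs x + Vs y.
Proof.
apply: ip_ext_r => z; case: hV => adj iso.
by rewrite -adj ipDr ipZr ipDr ipZr -!adj.
Qed.

Lemma iso_nm x : hnorm ip (V x) = hnorm ip x.
Proof. by case: hV => _ iso; rewrite /hnorm iso. Qed.

Lemma iso_bd u : hnorm ip (Vs u) <= hnorm ip u.
Proof.
have h : hnorm ip (Vs u) ^+ 2 <= hnorm ip (Vs u) * hnorm ip u.
  rewrite nm_sq; case: hV => adj _.
  have e : ip (Vs u) (Vs u) = ip (V (Vs u)) u by rewrite adj.
  have h0 : 0 <= ip (V (Vs u)) u by rewrite -e ip_ge0.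
  rewrite e -(ger0_norm h0); apply: le_trans (CS _ _) _.
  by rewrite iso_nm.
have [z|nz] := eqVneq (hnorm ip (Vs u)) 0; first by rewrite z nm_ge0.
have pos : 0 < hnorm ip (Vs u) by rewrite lt0r nz nm_ge0.
by rewrite expr2 ler_pM2l in h.
Qed.

End Iso.

Lemma iso_comp V1 V1s V2 V2s : iso_pair V1 V1s -> iso_pair V2 V2s ->
  iso_pair (V1 \o V2) (V2s \o V1s).
Proof.
case=> a1 i1; case=> a2 i2; split.
  by move=> x y /=; rewrite a1 a2.
by move=> x y /=; rewrite i1 i2.
Qed.

Lemma iso_id : iso_pair id id.
Proof. by split. Qed.

Lemma lin_sum (T : H -> H) : (forall a x y, T (a *: x + y) = a *: T x + T y) ->
  forall n (d : nat -> R[i]) (v : nat -> H),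
  T (\sum_(i < n) d i *: v i) = \sum_(i < n) d i *: T (v i).
Proof.
move=> lin; have T0 : T 0 = 0.
  have := lin 1 0 0; rewrite scaler0 addr0 scale1r => h.
  by apply: (@addrI _ (T 0)); rewrite addr0 -h.
elim=> [|n IH] d v; first by rewrite !big_ord0.
by rewrite !big_ord_recr /= addrC lin IH addrC.
Qed.

End IP.

Section Alg.
Variables (R : realType) (H : lmodType R[i]).
Variable G : (H -> H) -> Prop.
Local Notation A := (gen_algebra G).

Lemma A_ext f g : (forall x, f x = g x) -> A f -> A g.
Proof. by move=> E; have -> : g = f by apply: functional_extensionality => x; rewrite E. Qed.

Lemma A0 : A (fun _ => 0).
Proof.
exists [::], (fun _ => 0); split; first by move=> i.
by apply: functional_extensionality => x; rewrite big_ord0.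
Qed.

Lemma AZ a f : A f -> A (fun x => a *: f x).
Proof.
move=> [s [c [hs ->]]]; exists s, (fun i => a * c i); split => //.
apply: functional_extensionality => x; rewrite scaler_sumr.
by apply: eq_bigr => i _; rewrite scalerA.
Qed.

Lemma AD f g : A f -> A g -> A (fun x => f x + g x).
Proof.
move=> [s1 [c1 [hs1 ->]]] [s2 [c2 [hs2 ->]]].
exists (s1 ++ s2), (fun i => if (i < size s1)%N then c1 i else c2 (i - size s1)%N).
split.
  move=> i; rewrite size_cat nth_cat; case: ifP => hi hlt; first exact: hs1.
  apply: hs2; rewrite ltn_subLR //; rewrite leqNgt hi //.
apply: functional_extensionality => x.
rewrite -(big_mkord xpredT (fun i => c1 i *: nth id s1 i x)).
rewrite -(big_mkord xpredT (fun i => c2 i *: nth id s2 i x)).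
rewrite -(big_mkord xpredT (fun i => (if (i < size s1)%N then c1 i else c2 (i - size s1)%N) *: nth id (s1 ++ s2) i x)).
rewrite size_cat (@big_cat_nat _ _ _ (size s1) 0 _ _ _ (leq0n _) (leq_addr _ _)) /=.
congr (_ + _).
  rewrite big_nat_cond [in RHS]big_nat_cond; apply: eq_bigr => i /andP[/andP[_ hi] _].
  by rewrite nth_cat hi.
rewrite -{1}[size s1]add0n big_addn addKn.
apply: eq_bigr => i _.
by rewrite nth_cat ltnNge leq_addl /= addnK.
Qed.

Lemma A_sum n (F : nat -> H -> H) : (forall i, (i < n)%N -> A (F i)) ->
  A (fun x => \sum_(i < n) F i x).
Proof.
elim: n => [|n IH] h.
  by apply: A_ext A0 => x; rewrite big_ord0.
apply: A_ext (AD (IH (fun i hi => h i (leqW hi))) (h n (ltnSn n))) => x.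
by rewrite big_ord_recr.
Qed.

Lemma Aprod f : op_products G f -> A f.
Proof.
move=> hf; exists [:: f], (fun _ => 1); split.
  by case=> [|//] _; exact: hf.
by apply: functional_extensionality => x; rewrite big_ord1 scale1r.
Qed.

End Alg.

Section Words.
Variables (R : realType) (H : lmodType R[i]) (Z1 Z2 : H -> H) (p : nat).
Local Notation G := (fun A : H -> H => exists mu : seq bool, size mu = p /\ A = Zword Z1 Z2 mu).

Lemma Zword_cat w1 w2 x : Zword Z1 Z2 (w1 ++ w2) x = Zword Z1 Z2 w1 (Zword Z1 Z2 w2 x).
Proof. by elim: w1 => //= b w1 IH; rewrite /Zword /= -/(Zword Z1 Z2 _) IH. Qed.

Lemma Zword_prod m w : size w = (m.+1 * p)%N -> op_products G (Zword Z1 Z2 w).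
Proof.
elim: m w => [|m IH] w hw.
  exists [:: Zword Z1 Z2 w]; split => //; split.
    by case=> [|//] _; exists w; rewrite hw mul1n.
  by [].
have hd : size (drop p w) = (m.+1 * p)%N by rewrite size_drop hw mulSn addKn.
have [s [_ [hs E]]] := IH _ hd.
exists (Zword Z1 Z2 (take p w) :: s); split => //; split.
  case=> [|i] /= hi; last exact: hs.
  exists (take p w); split => //; rewrite size_take hw mulSn.
  case: ifP => // /negbT; rewrite -leqNgt => h.
  by apply/eqP; rewrite eqn_leq h leq_addr.
apply: functional_extensionality => x /=.
by rewrite -{1}(cat_take_drop p w) Zword_cat E.
Qed.

End Words.

Lemma pigeon p : (0 < p)%N -> exists r, forall K, exists k, (K <= k)%N /\ (p %| 2 ^ k + r)%N.
Proof.
move=> hp.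
have [q [hq hinf]] : exists q, (q < p)%N /\ forall K, exists k, (K <= k)%N /\ (2 ^ k %% p)%N = q.
  apply: NNPP => hn.
  have hev : forall q, (q < p)%N -> ev (fun k => (2 ^ k %% p)%N <> q).
    move=> q hq; apply: NNPP => hne; apply: hn; exists q; split => // K.
    apply: NNPP => hK; apply: hne; exists K => k hk hkq; apply: hK; by exists k.
  have [n0 hn0] := ev_nat hev.
  by apply: (hn0 n0 (leqnn _) _ (ltn_pmod _ hp)).
exists (p - q)%N => K; have [k [hk hkq]] := hinf K; exists k; split => //.
by rewrite /dvdn -modnDml hkq subnKC ?modnn // ltnW.
Qed.

Lemma Zword_iso (R : realType) (H : lmodType R[i]) (ip : H -> H -> R[i])
  (Z1 Z1s : H -> H) : iso_pair ip Z1 Z1s -> forall Z2 r,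
  exists Vs, iso_pair ip (Zword Z1 Z2 (nseq r false)) Vs.
Proof.
move=> h1 Z2; elim=> [|r [Vs hV]]; first by exists id; apply: iso_id.
exists (Vs \o Z1s).
have E : Zword Z1 Z2 (nseq r.+1 false) = Z1 \o Zword Z1 Z2 (nseq r false) by [].
by rewrite E; apply: iso_comp.
Qed.

Theorem proposition3p1 (R : realType) (H : lmodType R[i]) (ip : H -> H -> R[i])
  (hH : hilbert_space ip) (hsep : separable ip) (hinf : infinite_dimensional H)
  (Z1 Z2 : H -> H) (hZ : read_isometries ip Z1 Z2)
  (p : nat) (hp : (0 < p)%N) :
  forall T : H -> H,
    wot_closure ip
      (gen_algebra (fun A => exists mu : seq bool, size mu = p /\ A = Zword Z1 Z2 mu)) T
    <-> bounded_linear ip T.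
Proof.
move=> T; split; first by case.
move=> hT; split => // s e e0.
have hip : inner_product_axioms ip by case: hH.
case: hZ => [[_ iso1] [_ [[Z1s [Z2s [adj1 [adj2 _]]]] [h [g [S [hh [hg [Sspan Sconv]]]]]]]]].
have [r hr] := pigeon hp.
pose V := Zword Z1 Z2 (nseq r false).
have [Vs hV] : exists Vs, iso_pair ip V Vs.
  by apply: (@Zword_iso _ _ _ Z1 Z1s); split.
case: hT => lin [M0 bd].
pose M := `|M0|.
have bd' : forall x, hnorm ip (T x) <= M * hnorm ip x.
  move=> x; have h0 : 0 <= M0 * hnorm ip x := le_trans (nm_ge0 hip _) (bd x).
  by rewrite /M -(ger0_norm (nm_ge0 hip x)) -normrM (ger0_norm h0).
pose T' := fun u => T (Vs u).
have linT' : forall a x y, T' (a *: x + y) = a *: T' x + T' y.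
  by move=> a x y; rewrite /T' (iso_lin hip hV) lin.
have bdT' : forall u, hnorm ip (T' u) <= M * hnorm ip u.
  move=> u; apply: le_trans (bd' _) _.
  by apply: ler_wpM2l; [exact: normr_ge0 | exact: (iso_bd hip hV)].
pose s' := map (fun xy => (V xy.1, xy.2)) s.
have e2 : 0 < e / 2 by rewrite divr_gt0 // ltr0n.
have [N hN] := approx hip hh hg linT' (normr_ge0 M0) bdT' s' e2.
have hNN := hN N (leqnn N).
pose c (b a : nat) := ip (T' (h b)) (g a).
pose Ctot := \sum_(b < N) \sum_(a < N) `|c b a|.
have Cp : 0 <= Ctot by apply: sumr_ge0 => b _; apply: sumr_ge0 => a _; exact: normr_ge0.
pose del := e / 2 / (Ctot + 1).
have del0 : 0 < del by rewrite divr_gt0 // ltr_wpDl.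
have hev : ev (fun k => forall z, z \in s -> forall b, (b < N)%N -> forall a, (a < N)%N ->
   `|ip (S a b k (V z.1)) z.2 - ip (rank_one ip (g a) (h b) (V z.1)) z.2| < del).
  apply: ev_seq => z _; apply: ev_nat => b _; apply: ev_nat => a _.
  exact: Sconv a b (V z.1) z.2 del del0.
have [K hK] := hev.
have [k [hk hdiv]] := hr K.
have hKk := hK k hk.
exists (fun x => \sum_(b < N) \sum_(a < N) c b a *: S a b k (V x)).
split.
  apply: (A_sum (F := fun b x => \sum_(a < N) c b a *: S a b k (V x))) => b _.
  apply: (A_sum (F := fun a x => c b a *: S a b k (V x))) => a _.
  apply: AZ.
  have [s0 [c0 [hs0 ES]]] := Sspan a b k.
  rewrite ES /=.
  apply: (A_sum (F := fun i x => c0 i *: nth id s0 i (V x))) => i hi.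
  apply: AZ.
  have [w [hw Ew]] := hs0 i hi.
  rewrite Ew.
  apply: (A_ext (f := Zword Z1 Z2 (w ++ nseq r false))).
    by move=> x; rewrite Zword_cat.
  apply: Aprod.
  have sz : size (w ++ nseq r false) = (2 ^ k + r)%N by rewrite size_cat size_nseq hw.
  have pos : (0 < (2 ^ k + r) %/ p)%N.
    rewrite lt0n; apply/negP => /eqP h0.
    have := divnK hdiv; rewrite h0 mul0n => h1.
    have : (0 < 2 ^ k + r)%N by rewrite ltn_addr // expn_gt0.
    by rewrite -h1.
  apply: (@Zword_prod _ _ Z1 Z2 p ((2 ^ k + r) %/ p).-1).
  by rewrite sz prednK // divnK.
move=> [x y] hz /=.
have hz' : (V x, y) \in s' := map_f (fun xy => (V xy.1, xy.2)) hz.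
have A1 := hNN _ hz'; rewrite /= /T' (iso_inv hip hV) in A1.
have I1 : ip (T (Vs (proj ip h N (V x)))) (proj ip g N y) =
    \sum_(b < N) \sum_(a < N) c b a * ip (rank_one ip (g a) (h b) (V x)) y.
  have L := lin_sum linT' N (fun i => ip (V x) (h i)) h.
  rewrite /T' in L; rewrite /proj L (ip_suml hip); apply: eq_bigr => b _.
  rewrite (ipZl hip) (ip_sumr hip) mulr_sumr; apply: eq_bigr => a _.
  rewrite (ipZr hip) /rank_one (ipZl hip) -(ipC hip) /c /T'.
  by rewrite [RHS]mulrC mulrA.
have I2 : ip (\sum_(b < N) \sum_(a < N) c b a *: S a b k (V x)) y =
    \sum_(b < N) \sum_(a < N) c b a * ip (S a b k (V x)) y.
  rewrite (ip_suml hip); apply: eq_bigr => b _; rewrite (ip_suml hip); apply: eq_bigr => a _.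
  by rewrite (ipZl hip).
have I3 : \sum_(b < N) \sum_(a < N) c b a * (ip (rank_one ip (g a) (h b) (V x)) y - ip (S a b k (V x)) y)
   = ip (T (Vs (proj ip h N (V x)))) (proj ip g N y) - ip (\sum_(b < N) \sum_(a < N) c b a *: S a b k (V x)) y.
  rewrite I1 I2 -sumrB; apply: eq_bigr => b _; rewrite -sumrB; apply: eq_bigr => a _.
  by rewrite mulrBr.
have -> : ip (T x) y - ip (\sum_(b < N) \sum_(a < N) c b a *: S a b k (V x)) y =
   (ip (T x) y - ip (T (Vs (proj ip h N (V x)))) (proj ip g N y)) +
   \sum_(b < N) \sum_(a < N) c b a * (ip (rank_one ip (g a) (h b) (V x)) y - ip (S a b k (V x)) y).
  by rewrite I3 addrA subrK.
rewrite (splitr e); apply: le_lt_trans (ler_normD _ _) _; apply: ltrD; first exact: A1.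
apply: le_lt_trans (ler_norm_sum _ _ _) _.
apply: (le_lt_trans (y := \sum_(b < N) \sum_(a < N) `|c b a| * del)).
  apply: ler_sum => b _; apply: le_trans (ler_norm_sum _ _ _) _; apply: ler_sum => a _.
  rewrite normrM; apply: ler_wpM2l; first exact: normr_ge0.
  rewrite distrC; apply: ltW; exact: (hKk (x, y) hz b (ltn_ord b) a (ltn_ord a)).
have -> : \sum_(b < N) \sum_(a < N) `|c b a| * del = Ctot * del.
  by rewrite /Ctot mulr_suml; apply: eq_bigr => b _; rewrite mulr_suml.
have E : e / 2 = del * (Ctot + 1) by rewrite /del divfK // gt_eqF // ltr_wpDl.
by rewrite E [Ctot * del]mulrC ltr_pM2l // ltrDl ltr01.
Qed.
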